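(* Let $\mathcal A$ be a small abelian category. The map $\mathsf{Cob}^b_0(\mathcal A)\to K_0^+(\mathcal A)$ sending the class of a positive $\mathcal A$-decorated 0-foam with points labelled $X_1,\dots,X_n$ to $[X_1]+\dots+[X_n]$ is a well-defined isomorphism of commutative monoids.
   Context: $K_0^+(\mathcal A)$ is the commutative monoid generated by symbols $[X]$, $X\in\mathrm{Ob}(\mathcal A)$, with relations $[X_2]=[X_1]+[X_3]$ for each short exact sequence $0\to X_1\to X_2\to X_3\to0$ (no inverses adjoined). A positive $\mathcal A$-decorated 0-foam is a finite set of points, each labelled by an object of $\mathcal A$ (and carrying the sign $+$). An $\mathcal A$-decorated 1-foam is a finite oriented graph with trivalent interior vertices. Each vertex is either ''in'' (two edges in, one out) or ''out'' (one in, two out); the two edges of equal orientation type are thin and the third is thick. The foam carries a flat connection with fibers in $\mathcal A$. At each vertex the thin edges are ordered (first, second), and a short exact sequence $0\to X_{\mathrm{first}}\to X_{\mathrm{thick}}\to X_{\mathrm{second}}\to0$ of nearby fibers is fixed. A braid-like cobordism from a positive 0-foam $M_0$ to a positive 0-foam $M_1$ is an $\mathcal A$-decorated 1-foam $U$ with boundary $M_0\sqcup M_1$, together with a continuous function $h:U\to[0,1]$ satisfying: - $h^{-1}(0)=M_0$ and $h^{-1}(1)=M_1$; - $h$ is strictly increasing along every edge in the direction of its orientation. In particular there are no local maxima or minima, and every edge is oriented from $M_0$ towards $M_1$. $\mathsf{Cob}^b_0(\mathcal A)$ is the set of positive $\mathcal A$-decorated 0-foams modulo the equivalence relation generated by the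 existence of a braid-like cobordism. It is a commutative monoid under disjoint union. *)

(* Defs.v *)
From HB Require Import structures.
From mathcomp Require Import all_boot all_algebra.
From Stdlib Require Import Reals Relations Permutation.

Import GRing.Theory.

(* Preadditive category data: objects, abelian groups of morphisms,    *)
(* identities, composition (written in diagrammatic order:             *)
(* comp f g = "first f, then g").                                      *)
Record PreCat := {
  Ob : Type;
  Hom : Ob -> Ob -> zmodType;
  idm : forall X : Ob, Hom X X;
  comp : forall X Y Z : Ob, Hom X Y -> Hom Y Z -> Hom X Z
}.

Arguments Ob : clear implicits.
Arguments Hom {p} X Y.
Arguments idm {p} X.
Arguments comp {p X Y Z} f g.

Section Abelian.
Variable C : PreCat.

Local Open Scope ring_scope.

Definition is_zero_obj (Z : Ob C) : Prop :=
  (forall (Y : Ob C) (f : Hom Z Y), f = 0) /\ (forall (Y : Ob C) (f : Hom Y Z), f = 0).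

Definition mono {X Y : Ob C} (f : Hom X Y) : Prop :=
  forall (W : Ob C) (g h : Hom W X), comp g f = comp h f -> g = h.

Definition epi {X Y : Ob C} (f : Hom X Y) : Prop :=
  forall (W : Ob C) (g h : Hom Y W), comp f g = comp f h -> g = h.

Definition is_kernel {X Y K : Ob C} (f : Hom X Y) (k : Hom K X) : Prop :=
  comp k f = 0 /\
  forall (W : Ob C) (g : Hom W X), comp g f = 0 -> exists! u : Hom W K, comp u k = g.

Definition is_cokernel {X Y Q : Ob C} (f : Hom X Y) (q : Hom Y Q) : Prop :=
  comp f q = 0 /\
  forall (W : Ob C) (g : Hom Y W), comp f g = 0 -> exists! u : Hom Q W, comp q u = g.

Definition is_biproduct {X Y P : Ob C}
  (i1 : Hom X P) (i2 : Hom Y P) (p1 : Hom P X) (p2 : Hom P Y) : Prop :=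
  [/\ comp i1 p1 = idm X, comp i2 p2 = idm Y, comp i1 p2 = 0, comp i2 p1 = 0
    & comp p1 i1 + comp p2 i2 = idm P].

Definition is_iso {X Y : Ob C} (f : Hom X Y) : Prop :=
  exists g : Hom Y X, comp f g = idm X /\ comp g f = idm Y.

(* An abelian category (the objects form a type, i.e. it is small). *)
Record is_abelian : Prop := {
  comp_idl : forall (X Y : Ob C) (f : Hom X Y), comp (idm X) f = f;
  comp_idr : forall (X Y : Ob C) (f : Hom X Y), comp f (idm Y) = f;
  comp_assoc : forall (X Y Z W : Ob C) (f : Hom X Y) (g : Hom Y Z) (h : Hom Z W),
      comp f (comp g h) = comp (comp f g) h;
  comp_addl : forall (X Y Z : Ob C) (f g : Hom X Y) (h : Hom Y Z),
      comp (f + g) h = comp f h + comp g h;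
  comp_addr : forall (X Y Z : Ob C) (f : Hom X Y) (g h : Hom Y Z),
      comp f (g + h) = comp f g + comp f h;
  has_zero : exists Z : Ob C, is_zero_obj Z;
  has_biproducts : forall X Y : Ob C, exists (P : Ob C) (i1 : Hom X P)
      (i2 : Hom Y P) (p1 : Hom P X) (p2 : Hom P Y), is_biproduct i1 i2 p1 p2;
  has_kernels : forall (X Y : Ob C) (f : Hom X Y), exists K (k : Hom K X), is_kernel f k;
  has_cokernels : forall (X Y : Ob C) (f : Hom X Y),
      exists Q (q : Hom Y Q), is_cokernel f q;
  mono_is_kernel : forall (X Y : Ob C) (f : Hom X Y),
      mono f -> exists Z (g : Hom Y Z), is_kernel g f;
  epi_is_cokernel : forall (X Y : Ob C) (g : Hom X Y),
      epi g -> exists Z (f : Hom Z X), is_cokernel f g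
}.

Definition is_ses {X1 X2 X3 : Ob C} (f : Hom X1 X2) (g : Hom X2 X3) : Prop :=
  is_kernel g f /\ is_cokernel f g.

Definition ses_exists (X1 X2 X3 : Ob C) : Prop :=
  exists (f : Hom X1 X2) (g : Hom X2 X3), is_ses f g.

(* K_0^+(A): the commutative monoid presented by generators [X] and    *)
(* relations [X2] = [X1] + [X3] for short exact sequences.  Elements   *)
(* of the free commutative monoid on Ob are lists up to permutation;   *)
(* K0eq is the monoid congruence generated by the relations, so        *)
(* K_0^+(A) = seq (Ob C) / K0eq, the class of [:: X1; ..; Xn] being    *)
(* [X1] + ... + [Xn], and the monoid law being concatenation.          *)
Inductive K0step : seq (Ob C) -> seq (Ob C) -> Prop :=
| K0_perm s t : Permutation s t -> K0step s t
| K0_ses (l r : seq (Ob C)) (X1 X2 X3 : Ob C) :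
    ses_exists X1 X2 X3 -> K0step (l ++ X2 :: r) (l ++ X1 :: X3 :: r).

Definition K0eq : seq (Ob C) -> seq (Ob C) -> Prop :=
  clos_refl_sym_trans (seq (Ob C)) K0step.

(* Positive A-decorated 0-foams: a finite set of points labelled by    *)
(* objects (all with sign +).                                          *)
Record Foam0 := { pts : finType; lab : pts -> Ob C }.

Definition labels (M : Foam0) : seq (Ob C) := map (@lab M) (enum (pts M)).

Definition foam_union (M N : Foam0) : Foam0 :=
  {| pts := (pts M + pts N)%type;
     lab := fun x => match x with inl a => @lab M a | inr b => @lab N b end |}.

Definition foam_empty : Foam0 := {| pts := void; lab := fun x => match x with end |}.

(* Braid-like cobordisms, as combinatorial 1-foams.                    *)
(* Nodes of the graph: the points of M0, the interior vertices V, and  *)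
(* the points of M1.  Edges are oriented src -> tgt.  The flat         *)
(* connection is recorded by one fiber object per edge (fibers along   *)
(* an edge are identified by the connection), and at each boundary     *)
(* point the label is isomorphic to the fiber of the adjacent edge.    *)
Record BraidCob (M0 M1 : Foam0) := {
  cV : finType;
  cE : finType;
  csrc : cE -> (pts M0 + (cV + pts M1))%type;
  ctgt : cE -> (pts M0 + (cV + pts M1))%type;
  fiber : cE -> Ob C;
  height : cV -> R;
  vin : cV -> bool;                   (* true: "in" vertex, false: "out" vertex *)
  vfst : cV -> cE;
  vsnd : cV -> cE;
  vthk : cV -> cE;
  bdry0 : forall p : pts M0, exists e, csrc e = inl p /\
            forall e', (csrc e' = inl p \/ ctgt e' = inl p) -> e' = e;
  bdry1 : forall q : pts M1, exists e, ctgt e = inr (inr q) /\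
            forall e', (csrc e' = inr (inr q) \/ ctgt e' = inr (inr q)) -> e' = e;
  bdry0_iso : forall (p : pts M0) e, csrc e = inl p ->
            exists f : Hom (@lab M0 p) (fiber e), is_iso f;
  bdry1_iso : forall (q : pts M1) e, ctgt e = inr (inr q) ->
            exists f : Hom (fiber e) (@lab M1 q), is_iso f;
  v_distinct : forall v, [/\ vfst v <> vsnd v, vfst v <> vthk v & vsnd v <> vthk v];
  v_incident : forall v, if vin v then
        [/\ ctgt (vfst v) = inr (inl v), ctgt (vsnd v) = inr (inl v)
          & csrc (vthk v) = inr (inl v)]
      else
        [/\ csrc (vfst v) = inr (inl v), csrc (vsnd v) = inr (inl v)
          & ctgt (vthk v) = inr (inl v)];
  v_only : forall v e, (csrc e = inr (inl v) \/ ctgt e = inr (inl v)) ->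
        [\/ e = vfst v, e = vsnd v | e = vthk v];
  v_ses : forall v, ses_exists (fiber (vfst v)) (fiber (vthk v)) (fiber (vsnd v));
  (* height function: h^-1(0) = M0, h^-1(1) = M1, strictly increasing
     along every edge in the direction of its orientation *)
  h_range : forall v, Rlt R0 (height v) /\ Rlt (height v) R1;
  h_incr : forall e,
      Rlt (match csrc e with inl _ => R0 | inr (inl v) => height v | inr (inr _) => R1 end)
          (match ctgt e with inl _ => R0 | inr (inl v) => height v | inr (inr _) => R1 end)
}.

Definition cob_equiv : Foam0 -> Foam0 -> Prop :=
  clos_refl_sym_trans Foam0 (fun M N => inhabited (BraidCob M N)).

End Abelian.

Arguments foam_empty {C}.
Arguments labels {C} M.
Arguments foam_union {C} M N.
Arguments K0eq {C}.
Arguments cob_equiv {C}.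
Arguments ses_exists {C}.

(* Main.v *)
Require Import Defs.
From mathcomp Require Import all_boot all_algebra.
From Stdlib Require Import Relations Permutation.
From Stdlib Require List.
Set Implicit Arguments. Unset Strict Implicit.
Notation Hom := Defs.Hom.
Notation comp := Defs.comp.
Notation idm := Defs.idm.
Notation Ob := Defs.Ob.
Import GRing.Theory.
Arguments is_iso {C X Y} f.
Arguments is_zero_obj {C} Z.
Arguments is_kernel {C X Y K} f k.
Arguments is_cokernel {C X Y Q} f q.
Arguments is_ses {C X1 X2 X3} f g.

Lemma perm_eq_Perm (T : eqType) (s t : seq T) : perm_eq s t -> Permutation s t.
Proof.
elim: s t => [|x s IH] t.
  by rewrite perm_sym => /perm_nilP ->.
move=> pst.
have xt : x \in t by rewrite -(perm_mem pst) mem_head.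
case/splitPr: xt pst => t1 t2 pst.
have H : perm_eq s (t1 ++ t2).
  rewrite -(perm_cons x); apply: (seq.perm_trans pst).
  by rewrite -cat1s perm_catCA.
apply: Permutation_cons_app. exact: IH.
Qed.

Lemma enum_sum_perm (A B : finType) :
  perm_eq (enum {: A + B}) (map inl (enum A) ++ map inr (enum B)).
Proof.
apply: uniq_perm.
- exact: enum_uniq.
- rewrite cat_uniq (map_inj_uniq (@inl_inj _ _)) (map_inj_uniq (@inr_inj _ _)) !enum_uniq /=.
  rewrite andbT; apply/hasPn => x /mapP [b _ ->]; apply/mapP => [[a _]] //.
- by case=> x; rewrite mem_enum mem_cat; apply/esym/orP; [left|right]; apply: map_f; rewrite mem_enum.
Qed.

Section K0.
Variable C : PreCat.
Variable HC : is_abelian C.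
Local Open Scope ring_scope.

Lemma K0_refl (s : seq (Ob C)) : K0eq s s.
Proof. exact: rst_refl. Qed.
Lemma K0_sym (s t : seq (Ob C)) : K0eq s t -> K0eq t s.
Proof. exact: rst_sym. Qed.
Lemma K0_trans (s t u : seq (Ob C)) : K0eq s t -> K0eq t u -> K0eq s u.
Proof. exact: rst_trans. Qed.

Lemma K0step_ctx (a b s t : seq (Ob C)) :
  K0step C s t -> K0step C (a ++ s ++ b) (a ++ t ++ b).
Proof.
case=> [s0 t0 P | l r X1 X2 X3 H].
  apply: K0_perm. apply: Permutation_app_head. exact: Permutation_app_tail.
have -> : a ++ (l ++ X2 :: r) ++ b = (a ++ l) ++ X2 :: (r ++ b) by rewrite -!catA.
have -> : a ++ (l ++ [:: X1, X3 & r]) ++ b = (a ++ l) ++ X1 :: X3 :: (r ++ b) by rewrite -!catA.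
exact: K0_ses.
Qed.

Lemma K0_ctx (a b s t : seq (Ob C)) : K0eq s t -> K0eq (a ++ s ++ b) (a ++ t ++ b).
Proof.
elim=> [x y H | x | x y _ IH | x y z _ IH1 _ IH2].
- by apply: rst_step; apply: K0step_ctx.
- exact: rst_refl.
- exact: rst_sym.
- exact: rst_trans IH2.
Qed.

Lemma K0_cat (s s' t t' : seq (Ob C)) : K0eq s s' -> K0eq t t' -> K0eq (s ++ t) (s' ++ t').
Proof.
move=> H1 H2; apply: (@K0_trans _ (s' ++ t)).
  exact: (K0_ctx [::] t H1).
by have := K0_ctx s' [::] H2; rewrite !cats0.
Qed.

Lemma K0_perm' (s t : seq (Ob C)) : Permutation s t -> K0eq s t.
Proof. by move=> P; apply: rst_step; apply: K0_perm. Qed.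

Lemma comp0l (X Y Z : Ob C) (f : Hom Y Z) : comp (0 : Hom X Y) f = 0.
Proof.
have := comp_addl _ HC _ _ _ (0 : Hom X Y) 0 f; rewrite addr0 => /eqP.
move=> /eqP H; apply: (addrI (comp _ _)); rewrite addr0; exact: esym H.
Qed.

Lemma comp0r (X Y Z : Ob C) (f : Hom X Y) : comp f (0 : Hom Y Z) = 0.
Proof.
have := comp_addr _ HC _ _ _ f (0 : Hom Y Z) 0; rewrite addr0 => /eqP.
move=> /eqP H; apply: (addrI (comp _ _)); rewrite addr0; exact: esym H.
Qed.

Definition isoR (X Y : Ob C) := exists f : Hom X Y, is_iso f.

Lemma isoR_refl X : isoR X X.
Proof. exists (idm X); exists (idm X); split; exact: (comp_idl _ HC). Qed.

Lemma iso_ses (X Y Z : Ob C) (f : Hom X Y) :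
  is_zero_obj Z -> is_iso f -> ses_exists X Y Z.
Proof.
move=> [Z1 Z2] [g [fg gf]].
exists f, 0; split; split.
- exact: comp0r.
- move=> W h _; exists (comp h g); split.
    by rewrite -(comp_assoc _ HC) gf (comp_idr _ HC).
  move=> u <-. by rewrite -(comp_assoc _ HC) fg (comp_idr _ HC).
- exact: comp0r.
- move=> W h hf; exists 0; split.
    rewrite comp0l -[h](comp_idl _ HC) -gf -(comp_assoc _ HC) hf. by rewrite comp0r.
  by move=> u _; rewrite (Z1 _ u).
Qed.

Lemma iso_K0 (X Y : Ob C) : isoR X Y -> K0eq [:: X] [:: Y].
Proof.
move=> [f fi]; case: (has_zero _ HC) => Z HZ.
apply: (@K0_trans _ [:: X; Z]).
  apply: rst_step; apply: (@K0_ses C [::] [::]); apply: (@iso_ses _ _ _ (idm X)) => //.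
  by exists (idm X); split; exact: (comp_idl _ HC).
apply: rst_sym; apply: rst_step; apply: (@K0_ses C [::] [::]); exact: iso_ses fi.
Qed.

Lemma K0_map_iso (T : Type) (l : seq T) (f g : T -> Ob C) :
  (forall x, isoR (f x) (g x)) -> K0eq (map f l) (map g l).
Proof.
move=> H; elim: l => [|x l IH] /=; first exact: K0_refl.
exact: (@K0_cat [:: f x] [:: g x]) (iso_K0 (H x)) IH.
Qed.

Lemma isoR_sym (X Y : Ob C) : isoR X Y -> isoR Y X.
Proof. by move=> [f [g [fg gf]]]; exists g; exists f. Qed.

Lemma bdry_K0 (P E : finType) (lp : P -> Ob C) (fib : E -> Ob C) (Q : pred E) (ep : P -> E) :
  injective ep -> (forall e, Q e <-> exists p, e = ep p) ->
  (forall p, isoR (lp p) (fib (ep p))) ->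
  K0eq (map lp (enum P)) (map fib [seq e <- enum E | Q e]).
Proof.
move=> inj HQ Hi.
have pe : perm_eq [seq e <- enum E | Q e] (map ep (enum P)).
  apply: uniq_perm; first by rewrite filter_uniq ?enum_uniq.
    by rewrite (map_inj_uniq inj) enum_uniq.
  move=> e; rewrite mem_filter mem_enum andbT.
  apply/idP/mapP.
    by move/HQ => [p ->]; exists p; rewrite ?mem_enum.
  by move=> [p _ ->]; apply/HQ; exists p.
apply: (@K0_trans _ (map (fib \o ep) (enum P))).
  exact: K0_map_iso.
rewrite map_comp; apply: K0_perm'; apply: Permutation_map; apply: perm_eq_Perm.
by rewrite perm_sym.
Qed.

End K0.

From Stdlib Require Import Reals Lra.

Lemma exists_max (T : eqType) (f : T -> R) (s : seq T) (x0 : T) :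
  x0 \in s -> exists2 x, x \in s & forall y, y \in s -> Rle (f y) (f x).
Proof.
elim: s x0 => [|a s IH] x0 //= _.
case: s IH => [|b s] IH.
  by exists a => [|y]; rewrite ?mem_head // inE => /eqP ->; lra.
have [x xs Hx] := IH b (mem_head _ _).
case: (Rle_dec (f a) (f x)) => H.
  exists x; first by rewrite inE xs orbT.
  by move=> y; rewrite inE => /orP [/eqP ->|/Hx].
exists a; first exact: mem_head.
move=> y; rewrite inE => /orP [/eqP ->|/Hx]; lra.
Qed.

Section Cut.
Variables (C : PreCat) (HC : is_abelian C) (M0 M1 : Foam0 C) (B : BraidCob C M0 M1).

Local Notation E := (cE C M0 M1 B).
Local Notation V := (cV C M0 M1 B).
Local Notation src := (csrc C M0 M1 B).
Local Notation tgt := (ctgt C M0 M1 B).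
Local Notation fib := (fiber C M0 M1 B).
Local Notation ht := (height C M0 M1 B).
Local Notation Nd := (pts C M0 + (V + pts C M1))%type.

Definition hn (n : Nd) : R :=
  match n with inl _ => R0 | inr (inl v) => ht v | inr (inr _) => R1 end.

Lemma hincr e : Rlt (hn (src e)) (hn (tgt e)).
Proof. exact: h_incr. Qed.

Lemma hrange v : Rlt R0 (ht v) /\ Rlt (ht v) R1.
Proof. exact: h_range. Qed.

Lemma tgt_notM0 e p : tgt e <> inl p.
Proof.
move=> H; have := hincr e; rewrite H /=.
case: (src e) => [?|[w|?]] /=; try lra.
have := hrange w; lra.
Qed.

Lemma src_notM1 e q : src e <> inr (inr q).
Proof.
move=> H; have := hincr e; rewrite H /=.
case: (tgt e) => [?|[w|?]] /=; try lra.
have := hrange w; lra.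
Qed.

Definition inS (S : {set V}) (n : Nd) : bool :=
  match n with inl _ => true | inr (inl v) => v \in S | inr (inr _) => false end.

Definition cutP (S : {set V}) (e : E) : bool := inS S (src e) && ~~ inS S (tgt e).

Definition cutE (S : {set V}) : seq E := [seq e <- enum E | cutP S e].

Definition closed (S : {set V}) : Prop :=
  forall e v, tgt e = inr (inl v) -> v \in S -> inS S (src e).

Lemma perm_K0 (s t : seq E) : perm_eq s t -> K0eq (map fib s) (map fib t).
Proof. by move=> H; apply: K0_perm'; apply: Permutation_map; apply: perm_eq_Perm. Qed.

Lemma ex0 (p : pts C M0) : exists e, src e == inl p.
Proof. by have [e [H _]] := bdry0 C M0 M1 B p; exists e; apply/eqP. Qed.

Definition ep0 p := xchoose (ex0 p).

Lemma ep0_src p : src (ep0 p) = inl p.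
Proof. exact/eqP/(xchooseP (ex0 p)). Qed.

Lemma tgt_notin S e : ~~ inS S (tgt e) = (if tgt e is inr (inl w) then w \notin S else true).
Proof.
case E1: (tgt e) => [p|[w|q]] //=.
by have := tgt_notM0 E1.
Qed.

Lemma cut_base : K0eq (labels M0) (map fib (cutE set0)).
Proof.
apply: (bdry_K0 HC (ep := ep0)).
- by move=> p p' H; have := ep0_src p; rewrite H ep0_src => [[]].
- move=> e; rewrite /cutP tgt_notin; split.
    case E1: (src e) => [p|[w|q]] //=; last by rewrite in_set0.
    move=> _; exists p.
    have [e0 [_ U]] := bdry0 C M0 M1 B p.
    by rewrite (U e (or_introl E1)) (U (ep0 p) (or_introl (ep0_src p))).
  move=> [p ->]; rewrite ep0_src /=.
  by case: (tgt (ep0 p)) => [?|[w|?]] //; rewrite in_set0.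
- move=> p; exact: (bdry0_iso C M0 M1 B p (ep0 p) (ep0_src p)).
Qed.

Lemma ex1 (q : pts C M1) : exists e, tgt e == inr (inr q).
Proof. by have [e [H _]] := bdry1 C M0 M1 B q; exists e; apply/eqP. Qed.

Definition ep1 q := xchoose (ex1 q).

Lemma ep1_tgt q : tgt (ep1 q) = inr (inr q).
Proof. exact/eqP/(xchooseP (ex1 q)). Qed.

Lemma src_inT e : inS setT (src e).
Proof.
case E1: (src e) => [p|[w|q]] //=.
by have := src_notM1 E1.
Qed.

Lemma cut_top : K0eq (labels M1) (map fib (cutE setT)).
Proof.
apply: (bdry_K0 HC (ep := ep1)).
- by move=> p p' H; have := ep1_tgt p; rewrite H ep1_tgt => [[]].
- move=> e; rewrite /cutP src_inT tgt_notin /=; split.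
    case E1: (tgt e) => [p|[w|q]] //=.
    - by have := tgt_notM0 E1.
    - by rewrite in_setT.
    move=> _; exists q.
    have [e0 [_ U]] := bdry1 C M0 M1 B q.
    by rewrite (U e (or_intror E1)) (U (ep1 q) (or_intror (ep1_tgt q))).
  by move=> [p ->]; rewrite ep1_tgt.
- move=> q; apply: isoR_sym; exact: (bdry1_iso C M0 M1 B q (ep1 q) (ep1_tgt q)).
Qed.

Lemma noloop e w : src e = inr (inl w) -> tgt e = inr (inl w) -> False.
Proof. by move=> H1 H2; have := hincr e; rewrite H1 H2 /=; lra. Qed.

Section Step.
Variables (S : {set V}) (v : V).
Hypotheses (vS : v \in S) (clS : closed S) (vmax : forall w, w \in S -> Rle (ht w) (ht v)).

Local Notation S' := (S :\ v).
Local Notation vn := (@inr (pts C M0) _ (@inl V (pts C M1) v)).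

Lemma inS_D1 n : n <> vn -> inS S' n = inS S n.
Proof.
case: n => [p|[w|q]] //= H.
rewrite in_setD1; case: eqP => [Ew|] //.
by case: H; rewrite Ew.
Qed.

Lemma src_v e : src e = vn -> cutP S e /\ ~~ cutP S' e.
Proof.
move=> E1; rewrite /cutP E1 /= vS setD11; split => //.
case E2: (tgt e) => [p|[w|q]] //=.
  by have := tgt_notM0 E2.
apply/negP => wS; have := vmax wS; have := hincr e; rewrite E1 E2 /=; lra.
Qed.

Lemma tgt_v e : tgt e = vn -> ~~ cutP S e /\ cutP S' e.
Proof.
move=> E1; rewrite /cutP E1 /= vS setD11 andbF andbT; split => //.
rewrite inS_D1; first exact: (clS E1 vS).
by move=> E2; apply: (noloop E2 E1).
Qed.

Lemma other_e e : src e <> vn -> tgt e <> vn -> cutP S e = cutP S' e.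
Proof. by move=> H1 H2; rewrite /cutP !inS_D1. Qed.

Lemma closed_D1 : closed S'.
Proof.
move=> e w E1; rewrite in_setD1 => /andP [wv wS].
rewrite inS_D1; first exact: (clS E1 wS).
move=> E2; have := vmax wS; have := hincr e; rewrite E1 E2 /=; lra.
Qed.

Definition outl := if vin C M0 M1 B v then [:: vthk C M0 M1 B v]
  else [:: vfst C M0 M1 B v; vsnd C M0 M1 B v].
Definition inl_ := if vin C M0 M1 B v then [:: vfst C M0 M1 B v; vsnd C M0 M1 B v]
  else [:: vthk C M0 M1 B v].

Lemma out_in_mem e : (src e = vn <-> e \in outl) /\ (tgt e = vn <-> e \in inl_).
Proof.
have := v_incident C M0 M1 B v; have := v_distinct C M0 M1 B v.
have Ho := fun H => v_only C M0 M1 B v e (or_introl H).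
have Hi := fun H => v_only C M0 M1 B v e (or_intror H).
rewrite /outl /inl_; case: (vin C M0 M1 B v) => [] [d1 d2 d3] [H1 H2 H3];
  split; split; rewrite ?inE.
- move=> E1; case: (Ho E1) => Ee; subst e; rewrite ?eqxx //.
  + by case: (noloop E1 H1).
  + by case: (noloop E1 H2).
- by move/eqP => ->.
- move=> E1; case: (Hi E1) => Ee; subst e; rewrite ?eqxx ?orbT //.
  by case: (noloop H3 E1).
- by case/orP => /eqP ->.
- move=> E1; case: (Ho E1) => Ee; subst e; rewrite ?eqxx ?orbT //.
  by case: (noloop E1 H3).
- by case/orP => /eqP ->.
- move=> E1; case: (Hi E1) => Ee; subst e; rewrite ?eqxx //.
  + by case: (noloop H1 E1).
  + by case: (noloop H2 E1).
- by move/eqP => ->.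
Qed.

Lemma outl_uniq : uniq outl /\ uniq inl_.
Proof.
have := v_distinct C M0 M1 B v; rewrite /outl /inl_.
case: (vin C M0 M1 B v) => [] [d1 d2 d3] /=; rewrite ?inE ?andbT //;
  by split => //; apply/eqP.
Qed.

Lemma ses_step : K0eq (map fib inl_) (map fib outl).
Proof.
have := v_ses C M0 M1 B v; rewrite /outl /inl_; case: (vin C M0 M1 B v) => H.
  by apply: rst_sym; apply: rst_step; apply: (@K0_ses C [::] [::]).
by apply: rst_step; apply: (@K0_ses C [::] [::]).
Qed.

Definition com := [seq e <- enum E | cutP S e && cutP S' e].

Lemma perm_S : perm_eq (cutE S) (com ++ outl).
Proof.
apply: uniq_perm; first by rewrite filter_uniq ?enum_uniq.
  rewrite cat_uniq filter_uniq ?enum_uniq //= (proj1 outl_uniq) andbT.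
  apply/hasPn => x /(proj2 (proj1 (out_in_mem x))) /src_v [_ H].
  by rewrite mem_filter (negbTE H) andbF.
move=> e; rewrite mem_cat /cutE /com !(mem_filter _ e (enum E)) mem_enum !andbT.
have [[O1 O2] [I1 I2]] := out_in_mem e.
case: (src e =P vn) => Es.
  by rewrite (O1 Es) orbT; have [-> _] := src_v Es.
case: (tgt e =P vn) => Et.
  have [H _] := tgt_v Et; rewrite (negbTE H) /=.
  by apply/esym/negP => /O2 /Es.
rewrite (other_e Es Et) andbb.
have Eo : (e \in outl) = false by apply/negP => /O2 /Es.
by rewrite Eo orbF.
Qed.

Lemma perm_S' : perm_eq (cutE S') (com ++ inl_).
Proof.
apply: uniq_perm; first by rewrite filter_uniq ?enum_uniq.
  rewrite cat_uniq filter_uniq ?enum_uniq //= (proj2 outl_uniq) andbT.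
  apply/hasPn => x /(proj2 (proj2 (out_in_mem x))) /tgt_v [H _].
  by rewrite mem_filter (negbTE H).
move=> e; rewrite mem_cat /cutE /com !(mem_filter _ e (enum E)) mem_enum !andbT.
have [[O1 O2] [I1 I2]] := out_in_mem e.
case: (tgt e =P vn) => Et.
  by rewrite (I1 Et) orbT; have [_ ->] := tgt_v Et.
case: (src e =P vn) => Es.
  have [_ H] := src_v Es; rewrite (negbTE H) andbF /=.
  by apply/esym/negP => /I2 /Et.
rewrite (other_e Es Et) andbb.
have Eo : (e \in inl_) = false by apply/negP => /I2 /Et.
by rewrite Eo orbF.
Qed.

Lemma cut_step : K0eq (map fib (cutE S')) (map fib (cutE S)).
Proof.
apply: (K0_trans (perm_K0 perm_S')).
apply: K0_sym; apply: (K0_trans (perm_K0 perm_S)).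
rewrite !map_cat; apply: K0_cat; first exact: K0_refl.
exact: K0_sym ses_step.
Qed.

End Step.

Lemma cut_all n (S : {set V}) : #|S| = n -> closed S -> K0eq (labels M0) (map fib (cutE S)).
Proof.
elim: n S => [|n IH] S cS clS.
  by move/eqP: cS; rewrite cards_eq0 => /eqP ->; exact: cut_base.
have [v0 v0S] : exists v, v \in S.
  by apply/set0Pn; rewrite -card_gt0 cS.
have v0e : v0 \in enum S by rewrite mem_enum.
have [v vS vmax] := exists_max ht v0e.
rewrite mem_enum in vS.
have vmax' : forall w, w \in S -> Rle (ht w) (ht v) by move=> w wS; apply: vmax; rewrite mem_enum.
apply: (K0_trans _ (cut_step vS clS vmax')).
apply: IH; last exact: closed_D1.
by rewrite (cardsD1 v S) vS in cS; case: cS.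
Qed.

Lemma cob_K0 : K0eq (labels M0) (labels M1).
Proof.
apply: (K0_trans (@cut_all #|[set: V]| setT erefl _)).
  move=> e w _ _; exact: src_inT.
exact: K0_sym cut_top.
Qed.

End Cut.

Section Build.
Variables (C : PreCat) (HC : is_abelian C).

Lemma match_cob (M N : Foam0 C) (R : pts C M -> pts C N -> bool) :
  (forall p q, R p q -> lab C N q = lab C M p) ->
  (forall p, exists q, R p q /\ forall q', R p q' -> q' = q) ->
  (forall q, exists p, R p q /\ forall p', R p' q -> p' = p) ->
  inhabited (BraidCob C M N).
Proof.
move=> HR Hp Hq.
pose Ed := ({pq : pts C M * pts C N | R pq.1 pq.2} : finType).
pose src := fun e : Ed => @inl _ (void + pts C N)%type (val e).1.
pose tgt := fun e : Ed => @inr (pts C M) (void + pts C N)%type (inr (val e).2).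
constructor.
refine (@Build_BraidCob C M N void Ed src tgt (fun e => lab C M (val e).1)
  (fun v => match v with end) (fun v => match v with end) (fun v => match v with end)
  (fun v => match v with end) (fun v => match v with end) _ _ _ _ _ _ _ _ _ _);
  try (by case).
- move=> p; have [q [Rpq U]] := Hp p.
  exists (exist _ (p, q) Rpq); split => // e' [H|H] //.
  apply: val_inj => /=; case: e' H => [[p' q'] /= Rpq'] [Ep]; subst p'.
  by rewrite (U q' Rpq').
- move=> q; have [p [Rpq U]] := Hq q.
  exists (exist _ (p, q) Rpq); split => // e' [H|H] //.
  apply: val_inj => /=; case: e' H => [[p' q'] /= Rpq'] [Eq]; subst q'.
  by rewrite (U p' Rpq').
- move=> p e [<-]; exact: (isoR_refl HC (lab C M (val e).1)).
- move=> q [[p q'] /= Rpq] [<-] /=; rewrite (HR _ _ Rpq); exact: (isoR_refl HC (lab C M p)).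
- move=> e /=; exact: Rlt_0_1.
Qed.

Definition single (x : Ob C) : Foam0 C := @Build_Foam0 C unit (fun _ => x).
Definition pair3 (x y : Ob C) : Foam0 C := @Build_Foam0 C bool (fun b => if b then x else y).

Lemma ses_cob (A : Foam0 C) (X1 X2 X3 : Ob C) : ses_exists X1 X2 X3 ->
  inhabited (BraidCob C (foam_union A (single X2)) (foam_union A (pair3 X1 X3))).
Proof.
move=> Hs.
pose Ed := ((pts C A + (unit + bool))%type : finType).
pose Nd := ((pts C A + unit) + (unit + (pts C A + bool)))%type.
pose src := fun e : Ed => match e return Nd with
  | inl a => inl (inl a) | inr (inl _) => inl (inr tt) | inr (inr _) => inr (inl tt) end.
pose tgt := fun e : Ed => match e return Nd with
  | inl a => inr (inr (inl a)) | inr (inl _) => inr (inl tt) | inr (inr b) => inr (inr (inr b)) end.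
pose fib := fun e : Ed => match e with
  | inl a => lab C A a | inr (inl _) => X2 | inr (inr b) => if b then X1 else X3 end.
constructor.
refine (@Build_BraidCob C (foam_union A (single X2)) (foam_union A (pair3 X1 X3)) unit Ed src tgt fib (fun _ => (/2)%R) (fun _ => false)
  (fun _ => inr (inr true)) (fun _ => inr (inr false)) (fun _ => inr (inl tt))
  _ _ _ _ _ _ _ _ _ _).
- case=> [a|[]].
    by exists (inl a); split => // -[a'|[[]|b]] /= [] H; inversion H.
  by exists (inr (inl tt)); split => // -[a'|[[]|b]] /= [] H; inversion H.
- case=> [a|b].
    by exists (inl a); split => // -[a'|[[]|b']] /= [] H; inversion H.
  by exists (inr (inr b)); split => // -[a'|[[]|b']] /= [] H; inversion H.
- case=> [a|[]] [a'|[[]|b]] //= H; inversion H; subst; exact: (isoR_refl HC _).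
- case=> [a|b] [a'|[[]|b']] //= H; inversion H; subst; exact: (isoR_refl HC _).
- by move=> _; split.
- by move=> [].
- move=> [] [a|[[]|[]]] //= [] //; by [constructor 1|constructor 2|constructor 3].
- by move=> _.
- by move=> _; split; lra.
- case=> [a|[[]|b]] /=; lra.
Qed.

End Build.

Lemma appE T (s t : seq T) : List.app s t = cat s t.
Proof. reflexivity. Qed.

Lemma mapE T U (f : T -> U) (s : seq T) : List.map f s = seq.map f s.
Proof. reflexivity. Qed.

Lemma perm_match (Ob0 : Type) (P Q : finType) (lp : P -> Ob0) (lq : Q -> Ob0) (sp : seq P) :
  forall sq : seq Q, uniq sp -> uniq sq -> Permutation (map lp sp) (map lq sq) ->
  exists R : P -> Q -> bool,
    [/\ forall p q, R p q -> lq q = lp p,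
        forall p q, R p q -> (p \in sp) && (q \in sq),
        forall p, p \in sp -> exists q, R p q /\ forall q', R p q' -> q' = q
      & forall q, q \in sq -> exists p, R p q /\ forall p', R p' q -> p' = p].
Proof.
elim: sp => [|p sp IH] sq usp usq H.
  have := Permutation_nil H; case: sq {usq H} => // _.
  by exists (fun _ _ => false); split.
have [l1 [l2 E1]] := Permutation_vs_cons_inv (Permutation_sym H).
have [sq1 [sq' [Esq [M1 M2]]]] := @List.map_eq_app _ _ _ _ _ _ E1.
have [q [sq2 [Esq' [Hq M3]]]] := @List.map_eq_cons _ _ _ _ _ _ M2.
rewrite appE in Esq; subst sq sq'.
move: usp => /= /andP [psp usp].
have uq : uniq (q :: sq1 ++ sq2).
  have pe : perm_eq (sq1 ++ q :: sq2) (q :: sq1 ++ sq2) by rewrite -cat1s perm_catCA.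
  by rewrite -(perm_uniq pe).
move: (uq) => /= /andP [qsq uq'].
have H' : Permutation (map lp sp) (map lq (sq1 ++ sq2)).
  have H0 : Permutation (lp p :: map lp sp) (List.app l1 (lp p :: l2)).
    by rewrite -E1; exact: H.
  have e1 : [seq lq i | i <- sq1] = l1 := M1.
  have e3 : [seq lq i | i <- sq2] = l2 := M3.
  rewrite map_cat e1 e3 -appE; exact: Permutation_cons_app_inv H0.
have [R' [R1 R2 R3 R4]] := IH _ usp uq' H'.
exists (fun p' q' => ((p' == p) && (q' == q)) || R' p' q'); split.
- move=> p' q' /orP [/andP [/eqP -> /eqP ->]|/R1] //.
- move=> p' q' /orP [/andP [/eqP -> /eqP ->]|/R2 /andP [a b]].
    by rewrite mem_head mem_cat inE eqxx orbT.
  rewrite inE a orbT /=; move: b; rewrite !mem_cat inE => /orP [->|->] //.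
  by rewrite !orbT.
- move=> p'; rewrite inE => /orP [/eqP ->|p'sp].
    exists q; split; first by rewrite !eqxx.
    move=> q' /orP [/andP [_ /eqP ->] //|/R2 /andP [a _]].
    by rewrite a in psp.
  have [q' [Rq U]] := R3 p' p'sp; exists q'; split; first by rewrite Rq orbT.
  move=> q'' /orP [/andP [/eqP Ep _]|/U //].
  by subst p'; rewrite p'sp in psp.
- move=> q'; rewrite mem_cat inE orbCA -mem_cat => /orP [/eqP ->|q'sq].
    exists p; split; first by rewrite !eqxx.
    move=> p' /orP [/andP [/eqP -> _] //|/R2 /andP [_ b]].
    by rewrite b in qsq.
  have [p' [Rp U]] := R4 q' q'sq; exists p'; split; first by rewrite Rp orbT.
  move=> p'' /orP [/andP [_ /eqP Eq]|/U //].
  by subst q'; rewrite q'sq in qsq.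
Qed.

Section Final.
Variables (C : PreCat) (HC : is_abelian C).

Lemma labels_union (M N : Foam0 C) :
  Permutation (labels (foam_union M N)) (labels M ++ labels N).
Proof.
rewrite /labels; apply: (Permutation_trans (Permutation_map _ (perm_eq_Perm (enum_sum_perm _ _)))).
by rewrite mapE map_cat -!map_comp.
Qed.

Lemma labels_single (x : Ob C) : labels (single x) = [:: x].
Proof. by rewrite /labels enumT unlock. Qed.

Lemma labels_pair3 (x y : Ob C) : labels (pair3 x y) = [:: x; y].
Proof. by rewrite /labels enumT unlock. Qed.

Lemma labels_empty : labels (@foam_empty C) = [::].
Proof. by rewrite /labels enumT unlock. Qed.

Fixpoint fos (s : seq (Ob C)) : Foam0 C :=
  match s with [::] => foam_empty | x :: s' => foam_union (single x) (fos s') end.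

Lemma labels_fos s : Permutation (labels (fos s)) s.
Proof.
elim: s => [|x s IH] /=; first by rewrite labels_empty.
apply: (Permutation_trans (labels_union _ _)).
by rewrite labels_single /=; apply: Permutation_cons.
Qed.

Lemma perm_cob (M N : Foam0 C) : Permutation (labels M) (labels N) -> cob_equiv M N.
Proof.
move=> H.
have [R [R1 _ R3 R4]] := perm_match (enum_uniq (pts C M)) (enum_uniq (pts C N)) H.
apply: rst_step; apply: (match_cob HC (R := R)) => //.
- by move=> p; apply: R3; rewrite mem_enum.
- by move=> q; apply: R4; rewrite mem_enum.
Qed.

Lemma K0_cob s t : K0eq s t -> cob_equiv (fos s) (fos t).
Proof.
elim=> {s t} [s t [s0 t0 P | l r X1 X2 X3 Hs] | s | s t _ IH | s t u _ IH1 _ IH2].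
- apply: perm_cob.
  apply: (Permutation_trans (labels_fos _)).
  apply: (Permutation_trans P); apply: Permutation_sym; exact: labels_fos.
- set A := fos (l ++ r).
  have [B] := ses_cob HC A Hs.
  apply: (rst_trans _ _ _ (foam_union A (single X2)) _).
    apply: perm_cob.
    apply: (Permutation_trans (labels_fos _)).
    apply: Permutation_sym; apply: (Permutation_trans (labels_union _ _)).
    rewrite labels_single -appE.
    apply: (Permutation_trans (Permutation_app_tail _ (labels_fos _))).
    apply: (Permutation_trans (Permutation_app_comm _ _)).
    rewrite !appE; apply: (Permutation_trans (@Permutation_app_swap_app _ [:: X2] l r)).
    by [].
  apply: (rst_trans _ _ _ (foam_union A (pair3 X1 X3)) _).
    exact: rst_step.
  apply: perm_cob.
  apply: Permutation_sym; apply: (Permutation_trans (labels_fos _)).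
  apply: Permutation_sym; apply: (Permutation_trans (labels_union _ _)).
  rewrite labels_pair3 -appE.
  apply: (Permutation_trans (Permutation_app_tail _ (labels_fos _))).
  apply: (Permutation_trans (Permutation_app_comm _ _)).
  rewrite !appE; apply: (Permutation_trans (@Permutation_app_swap_app _ [:: X1; X3] l r)).
  by [].
- exact: rst_refl.
- exact: rst_sym.
- exact: rst_trans IH2.
Qed.

End Final.

Theorem mainTheorem6 (C : PreCat) (HC : is_abelian C) :
  [/\ (forall M N : Foam0 C, cob_equiv M N -> K0eq (labels M) (labels N)),
      (forall M N : Foam0 C, K0eq (labels M) (labels N) -> cob_equiv M N),
      (forall s : seq (Ob C), exists M : Foam0 C, K0eq (labels M) s),
      (forall M N : Foam0 C,
          K0eq (labels (foam_union M N)) (labels M ++ labels N))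
    & labels (@foam_empty C) = [::]].
Proof.
split.
- move=> M N; elim=> [x y [B] | x | x y _ IH | x y z _ IH1 _ IH2].
  + exact: (@cob_K0 C HC x y B).
  + exact: K0_refl.
  + exact: K0_sym.
  + exact: K0_trans IH2.
- move=> M N H.
  apply: (rst_trans _ _ _ (fos (labels M)) _).
    by apply: (perm_cob HC); apply: Permutation_sym; exact: labels_fos.
  apply: (rst_trans _ _ _ (fos (labels N)) _); first exact: (K0_cob HC).
  by apply: (perm_cob HC); exact: labels_fos.
- by move=> s; exists (fos s); apply: K0_perm'; exact: labels_fos.
- by move=> M N; apply: K0_perm'; exact: labels_union.
- exact: labels_empty.
Qed.
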